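(* Let $q$ be a power of an odd prime with $q\equiv 3\pmod 4$, and let $k\equiv 0\pmod 4$ be a positive integer. Let $C_k=\{x\in\mathbb{F}_q^k : -x_1^2+x_2^2+\cdots+x_k^2=0\}$ and let $G_{Q,k}$ be the Cayley graph with vertex set $\mathbb{F}_q^k$ in which $x$ and $y$ are adjacent iff $x-y\in C_k$. Then its eigenvalues $\{\lambda_m\}_{m\in\mathbb{F}_q^k}$ are \[ \lambda_m=q^k\cdot\begin{cases} q^{-1}\delta_0(m)-q^{-\frac{k}{2}}+q^{-\frac{k+2}{2}} & \text{if } m\in C_k,\\ q^{-\frac{k+2}{2}} & \text{if } m\notin C_k.\end{cases}\]
   Context: Let $\chi$ be the principal (canonical) additive character of $\mathbb{F}_q$. The eigenvalue $\lambda_m$ of the Cayley graph is the one associated with the eigenvector $x\mapsto\chi(m\cdot x)$, namely $\lambda_m=\sum_{c\in C_k}\chi(-m\cdot c)$. $\delta_0(m)=1$ if $m=(0,\dots,0)$ and $\delta_0(m)=0$ otherwise. *)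

(* Defs.v *)
From HB Require Import structures.
From mathcomp Require Import all_boot all_order all_algebra all_field.
Set Implicit Arguments. Unset Strict Implicit. Unset Printing Implicit Defensive.
Import Order.TTheory GRing.Theory Num.Theory.
Local Open Scope ring_scope.

Section Defs.
Variable F : finFieldType.
Variable p : nat. (* intended: the characteristic of F *)

(* absolute trace F -> F_p (valued in the prime subfield of F): #|F| = p^n *)
Definition abs_trace (x : F) : F :=
  \sum_(i < logn p #|F|) x ^+ (p ^ i).

Definition trace_nat (x : F) : nat :=
  find (fun t : nat => t%:R == abs_trace x) (iota 0 p).

(* e^{2 pi i / p} in algC: p.-root (-1) has argument pi/p, its square 2pi/p *)
Definition omega_p : algC := (p.-root (-1)) ^+ 2.

Definition chi (x : F) : algC := omega_p ^+ trace_nat x.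

Variable k : nat.

Definition dotv (m x : 'rV[F]_k) : F := \sum_(i < k) m ord0 i * x ord0 i.

(* Q(x) = -x_1^2 + x_2^2 + ... + x_k^2 (index 0 is the first coordinate) *)
Definition Qform (x : 'rV[F]_k) : F :=
  \sum_(i < k) (if val i == 0%N then -1 else 1) * x ord0 i ^+ 2.

Definition Ck : {set 'rV[F]_k} := [set x | Qform x == 0].

Definition cay_adj (x y : 'rV[F]_k) : bool := (x - y) \in Ck.

Definition lambda (m : 'rV[F]_k) : algC := \sum_(c in Ck) chi (- dotv m c).

Definition delta0 (m : 'rV[F]_k) : algC := (m == 0)%:R.
End Defs.

(* Main.v *)
Require Import Defs.
From HB Require Import structures.
From mathcomp Require Import all_boot all_order all_algebra all_field.
From mathcomp Require Import zify ring lra.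
Import Order.TTheory GRing.Theory Num.Theory.
Local Open Scope ring_scope.
Set Implicit Arguments. Unset Strict Implicit. Unset Printing Implicit Defensive.

Section Trace.
Variables (F : finFieldType) (p : nat).
Hypothesis hc : p \in [pchar F].

Let pr : prime p := pcharf_prime hc.
Let p_gt0 : (0 < p)%N. Proof. exact: prime_gt0 pr. Qed.

Lemma cardF_pow : #|F| = (p ^ logn p #|F|)%N.
Proof. exact: (@card_pprimeChar p F hc). Qed.

Lemma frobX (x y : F) i : (x + y) ^+ (p ^ i) = x ^+ (p ^ i) + y ^+ (p ^ i).
Proof.
apply: exprDn_pchar; rewrite pnatX; apply/orP; left.
by rewrite (eq_pnat _ (pcharf_eq hc)) pnat_id.
Qed.

Lemma trD (x y : F) : abs_trace p (x + y) = abs_trace p x + abs_trace p y.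
Proof. by rewrite /abs_trace -big_split; apply: eq_bigr => i _; rewrite frobX. Qed.

Lemma tr_fix (x : F) : abs_trace p x ^+ p = abs_trace p x.
Proof.
rewrite /abs_trace.
have -> : (\sum_(i < logn p #|F|) x ^+ (p ^ i)) ^+ p
   = \sum_(i < logn p #|F|) x ^+ (p ^ i.+1).
  rewrite -[_ ^+ p]/(pFrobenius_aut hc _) rmorph_sum /=.
  by apply: eq_bigr => i _; rewrite pFrobenius_autE -exprM expnSr.
case En : (logn p #|F|) => [|n]; first by rewrite !big_ord0.
rewrite big_ord_recr big_ord_recl /= -En -cardF_pow expf_card expn0 expr1 addrC.
by congr (_ + _); apply: eq_bigr => i _.
Qed.

Lemma natr_inj_lt a b : (a < p)%N -> (b < p)%N -> a%:R = b%:R :> F -> a = b.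
Proof.
move=> ha hb.
wlog le: a b ha hb / (a <= b)%N.
  move=> H E; case: (leqP a b) => h; first exact: H.
  by apply/esym/H => //; apply: ltnW.
move=> E; apply/eqP; rewrite eqn_leq le /=; apply: contraT; rewrite -ltnNge => lt.
have : (p %| b - a)%N by rewrite (dvdn_pcharf hc) natrB // E subrr.
move/dvdn_leq; rewrite subn_gt0 => /(_ lt); move: hb; lia.
Qed.

Lemma fix_prime (y : F) : y ^+ p = y -> exists2 t, (t < p)%N & y = t%:R.
Proof.
move=> hy.
have [/existsP [t /eqP ->]|nE] := boolP [exists t : 'I_p, y == (val t)%:R].
  by exists (val t) => //; apply: ltn_ord.
pose P : {poly F} := 'X^p - 'X.
have p_gt1 : (1 < p)%N by apply: prime_gt1.
have szP : size P = p.+1.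
  by rewrite /P size_addl ?size_polyXn // size_opp size_polyX.
have P0 : P != 0 by rewrite -size_poly_eq0 szP.
pose rs := y :: [seq (t%:R : F) | t <- iota 0 p].
have rootP' : forall z : F, z ^+ p = z -> root P z.
  by move=> z hz; rewrite /root /P !hornerE hz subrr.
have Hall : all (root P) rs.
  rewrite /= rootP' //=; apply/allP => z /mapP [t _ ->]; apply: rootP'.
  by rewrite -[_ ^+ p]/(pFrobenius_aut hc _) pFrobenius_aut_nat.
have Hu : uniq rs.
  rewrite /= map_inj_in_uniq ?iota_uniq ?andbT; last first.
    move=> a b; rewrite !mem_iota !add0n => /andP [_ ha] /andP [_ hb]; exact: natr_inj_lt.
  apply/mapP => [[t]]; rewrite mem_iota add0n => /andP [_ ht] E.
  by move/existsP: nE; apply; exists (Ordinal ht); rewrite E.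
by have := max_poly_roots P0 Hall Hu; rewrite szP /= size_map size_iota ltnn.
Qed.

Lemma trace_natP (x : F) : (trace_nat p x < p)%N /\ (trace_nat p x)%:R = abs_trace p x.
Proof.
have [t ht E] := fix_prime (tr_fix x).
have hh : has (fun t : nat => t%:R == abs_trace p x) (iota 0 p).
  by apply/hasP; exists t; rewrite ?mem_iota ?add0n // E.
have := hh; rewrite has_find size_iota => lt.
split => //; have := nth_find 0%N hh; rewrite nth_iota // add0n.
by move/eqP.
Qed.

Lemma trace_natD (x y : F) :
  trace_nat p (x + y) = ((trace_nat p x + trace_nat p y) %% p)%N.
Proof.
have [h1 e1] := trace_natP x; have [h2 e2] := trace_natP y.
have [h3 e3] := trace_natP (x + y).
apply: natr_inj_lt => //; first by rewrite ltn_mod.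
by rewrite (GRing.natr_mod_pchar hc) natrD e1 e2 e3 trD.
Qed.

Lemma trace_nat0 : trace_nat p (0 : F) = 0%N.
Proof.
have [h e] := trace_natP 0; apply: natr_inj_lt => //.
rewrite e /abs_trace big1 // => i _; rewrite expr0n.
by rewrite expn_eq0 eqn0Ngt p_gt0.
Qed.

Lemma tr_nontriv : exists y : F, abs_trace p y != 0.
Proof.
have [/existsP [y hy]|nE] := boolP [exists y : F, abs_trace p y != 0].
  by exists y.
exfalso.
have {}nE : forall y : F, abs_trace p y = 0.
  by move=> y; apply/eqP; apply: contraNT nE => ne; apply/existsP; exists y.
set n := logn p #|F|.
have cF := cardF_pow; rewrite -/n in cF.
have p_gt1 : (1 < p)%N by apply: prime_gt1.
case En : n => [|n'].
  by move: (finNzRing_gt1 F); rewrite cF En.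
pose P : {poly F} := \sum_(i < n) 'X^(p ^ i).
have P0 : P != 0.
  have side : forall i : 'I_n', ('X^(p ^ bump 0 i) : {poly F})`_1 = 0.
    move=> i; rewrite coefXn; case: eqP => // h.
    have : (p <= p ^ (bump 0 i))%N.
      by rewrite /bump /= add1n expnS leq_pmulr // expn_gt0 (ltnW p_gt1).
    by rewrite -h => hle; exfalso; move: p_gt1 hle; lia.
  apply/eqP => /(congr1 (fun r : {poly F} => r`_1)).
  rewrite coef0 /P coef_sum En big_ord_recl /= expn0 coefXn eqxx big1 ?addr0.
    by move/eqP; rewrite oner_eq0.
  by move=> i _; apply: side.
have Hall : all (root P) (enum F).
  apply/allP => y _; rewrite /root /P horner_sum.
  by rewrite -[X in _ == X](nE y) /abs_trace -/n; apply/eqP; apply: eq_bigr => i _; rewrite hornerXn.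
have := max_poly_roots P0 Hall (enum_uniq F).
rewrite -cardE cF En.
have szP : (size P <= (p ^ n').+1)%N.
  apply: leq_trans (size_sum _ _ _) _.
  apply/bigmax_leqP => i _; rewrite size_polyXn ltnS leq_pexp2l ?(ltnW p_gt1) //.
  by have := ltn_ord i; rewrite {2}En.
move=> h; have := leq_trans h szP; rewrite ltnS expnS.
have : (0 < p ^ n')%N by rewrite expn_gt0 (ltnW p_gt1).
move: p_gt1; nia.
Qed.
End Trace.
Section Omega.
Variable p : nat.
Hypotheses (pr : prime p) (po : odd p).

Lemma omega_p_order : omega_p p ^+ p = 1.
Proof.
by rewrite /omega_p -exprM mulnC exprM rootCK ?prime_gt0 // sqrrN expr1n.
Qed.

Lemma root_neqN1 : p.-root (-1 : algC) != -1.
Proof.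
have p_gt1 : (1 < p)%N by apply: prime_gt1.
have p_gt0 : (0 < p)%N by apply: prime_gt0.
have [z prz] := C_prim_root_exists (ltn0Sn (2 * p).-1).
rewrite prednK ?muln_gt0 // in prz.
have z2 : z ^+ (2 * p) = 1 by apply: prim_expr_order.
have zp : z ^+ p = -1.
  have : (z ^+ p) ^+ 2 == 1 by rewrite -exprM mulnC z2.
  rewrite sqrf_eq1 => /orP [/eqP h|/eqP //].
  have := prim_order_dvd prz p; rewrite h eqxx => /esym.
  by move=> h2; move: (dvdn_leq p_gt0 (esym h2)); lia.
have nz : z != -1.
  apply/eqP => h.
  have := prim_order_dvd prz 2; rewrite h sqrrN expr1n eqxx => /esym h2.
  by move: (dvdn_leq (ltn0Sn 1) (esym h2)) (prime_gt1 pr); lia.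
have nz1 : `|z| = 1.
  have : `|z| ^+ (2 * p) == 1 by rewrite -normrX z2 normr1.
  by rewrite pexpr_eq1 ?muln_gt0 // => /eqP.
apply/eqP => hr.
pose y := if 0 <= 'Im z then z else z^*.
have yp : y ^+ p = -1.
  rewrite /y; case: ifP => _; first exact: zp.
  by rewrite -rmorphXn zp rmorphN1.
have yI : 0 <= 'Im y.
  rewrite /y; case: ifP => // /negbT h; rewrite Im_conj oppr_ge0.
  by apply: ltW; rewrite -real_ltNge ?Creal_Im ?real0 // in h.
have yRe : 'Re y = 'Re z by rewrite /y; case: ifP => _; [done|rewrite Re_conj].
have ny : `|y| = 1 by rewrite /y; case: ifP => _; [done|rewrite norm_conjC].
have := rootC_Re_max p_gt0 yp yI; rewrite hr.
have -> : 'Re (-1 : algC) = -1 by apply/Creal_ReP; rewrite rpredN1.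
move=> hle.
have hRe0 : 'Re y <= 0 by apply: (le_trans hle); rewrite lerN10.
have : `|'Re y| <= `|y| ?= iff (y \is Num.real) := leif_normC_Re_Creal y.
move=> [_]; rewrite ny.
have eq1 : `|'Re y| == 1.
  rewrite eq_le; apply/andP; split; first by rewrite -ny; apply: (leif_normC_Re_Creal y).
  by rewrite ler0_norm // lerNr.
rewrite eq1 => /esym yreal.
have yv : y = 'Re y by rewrite (Creal_ReP _ yreal).
have ym1 : y = -1.
  rewrite yv; apply/eqP; move: eq1; rewrite ler0_norm //.
  by rewrite eqr_oppLR.
move: nz; rewrite /y in ym1; case: ifP ym1 => _ hy; first by rewrite hy eqxx.
by rewrite -(conjCK z) hy rmorphN1 eqxx.
Qed.
Lemma omega_neq1 s : (0 < s < p)%N -> omega_p p ^+ s != 1.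
Proof.
move=> /andP [s0 sp]; apply/eqP => hs.
have p_gt0 : (0 < p)%N by apply: prime_gt0.
have [a _ /dvdnP [c hd]] := Bezoutl s p_gt0.
have cop : coprime p s by rewrite prime_coprime // gtnNdvd.
move: hd; rewrite (eqP cop) => hd.
have w1 : omega_p p = 1.
  have : omega_p p ^+ (1 + a * s) = 1 by rewrite hd mulnC exprM omega_p_order expr1n.
  by rewrite exprD expr1 mulnC exprM hs expr1n mulr1.
have r2 : (p.-root (-1 : algC)) ^+ 2 == 1 by rewrite -/(omega_p p) w1.
move: r2; rewrite sqrf_eq1 => /orP [/eqP r1|/eqP rN1].
  have := rootCK p_gt0 (-1 : algC); rewrite r1 expr1n => /eqP.
  by rewrite -subr_eq0 opprK -(natrD _ 1 1) pnatr_eq0.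
by move: (root_neqN1); rewrite rN1 eqxx.
Qed.
End Omega.

Section Chi.
Variables (F : finFieldType) (p : nat).
Hypotheses (hc : p \in [pchar F]) (po : odd p).
Let pr : prime p := pcharf_prime hc.

Lemma chiD (x y : F) : chi p (x + y) = chi p x * chi p y.
Proof.
by rewrite /chi (trace_natD hc) expr_mod ?omega_p_order // exprD.
Qed.

Lemma chi0 : chi p (0 : F) = 1.
Proof. by rewrite /chi trace_nat0. Qed.

Lemma chiN (x : F) : chi p (- x) * chi p x = 1.
Proof. by rewrite -chiD addNr chi0. Qed.

Lemma chi_sum (I : Type) (r : seq I) (P : pred I) (f : I -> F) :
  chi p (\sum_(i <- r | P i) f i) = \prod_(i <- r | P i) chi p (f i).
Proof. exact: (big_morph _ chiD chi0). Qed.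

Lemma chi_nontriv : exists y : F, chi p y != 1.
Proof.
have [y hy] := tr_nontriv hc; exists y.
have [lt e] := trace_natP hc y.
apply: omega_neq1 => //; rewrite lt andbT lt0n.
by apply: contraNneq hy => h; rewrite -e h.
Qed.

Lemma sum_chi : \sum_(x : F) chi p x = 0.
Proof.
have [y hy] := chi_nontriv.
have E : \sum_(x : F) chi p x = chi p y * \sum_(x : F) chi p x.
  rewrite {1}(reindex_inj (addrI y)) /= mulr_sumr.
  by apply: eq_bigr => x _; rewrite chiD.
have : (1 - chi p y) * \sum_(x : F) chi p x = 0 by rewrite mulrBl mul1r -E subrr.
move/eqP; rewrite mulf_eq0 subr_eq0 eq_sym (negPf hy) /= => /eqP //.
Qed.

Lemma sum_chi_mul (a : F) :
  \sum_(x : F) chi p (a * x) = (a == 0)%:R * #|F|%:R.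
Proof.
have [->|anz] := eqVneq a 0.
  rewrite mul1r (eq_bigr (fun _ => 1)) => [|x _]; last by rewrite mul0r chi0.
  by rewrite sumr_const.
rewrite mul0r; transitivity (\sum_(x : F) chi p x); last exact: sum_chi.
by rewrite [RHS](reindex_inj (mulfI anz)).
Qed.
End Chi.
Section Gauss.
Variables (F : finFieldType) (p : nat).
Hypotheses (hc : p \in [pchar F]) (po : odd p).
Let pr : prime p := pcharf_prime hc.

Lemma two_neq0 : (2 : F) != 0.
Proof.
rewrite -(dvdn_pcharf hc); apply/negP => /(dvdn_leq (ltn0Sn 1)) hle.
have : p != 2%N by apply: contraTneq po => ->.
by move: (prime_gt1 pr) hle; lia.
Qed.

Definition g (a : F) : algC := \sum_(x : F) chi p (a * x ^+ 2).

Lemma compsq (a b : F) : a != 0 ->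
  \sum_(x : F) chi p (a * x ^+ 2 - b * x) = chi p (- (b ^+ 2 / (4 * a))) * g a.
Proof.
move=> anz; have t0 := two_neq0.
pose c := b / (2 * a).
rewrite (reindex_inj (addIr c)) /= /g mulr_sumr; apply: eq_bigr => x _.
rewrite -(chiD hc); congr (chi p _).
have f0 : (4 : F) != 0.
  have -> : (4 : F) = 2 * 2 by ring.
  by rewrite mulf_neq0.
rewrite /c; field.
by rewrite anz f0 t0.
Qed.
Lemma g_mulN (a : F) : a != 0 -> g a * g (- a) = #|F|%:R.
Proof.
move=> anz; have t0 := two_neq0.
rewrite /g mulr_suml.
have E : forall x : F, chi p (a * x ^+ 2) * \sum_(y : F) chi p (- a * y ^+ 2)
   = \sum_(u : F) chi p (- a * u ^+ 2) * chi p ((- (2 * a * u)) * x).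
  move=> x; rewrite mulr_sumr (reindex_inj (addrI x)) /=; apply: eq_bigr => u _.
  by rewrite -!(chiD hc); congr (chi p _); ring.
rewrite (eq_bigr _ (fun x _ => E x)) exchange_big /=.
rewrite (bigD1 0) //= [X in _ + X]big1 ?addr0.
  rewrite (eq_bigr (fun _ => 1)); first by rewrite sumr_const.
  by move=> x _; rewrite !(expr0n, mulr0, mul0r, oppr0, chi0 hc) mulr1.
move=> u unz; rewrite -mulr_sumr (sum_chi_mul hc po) oppr_eq0 !mulf_eq0.
by rewrite (negPf t0) (negPf anz) (negPf unz) /= mul0r mulr0.
Qed.
Hypothesis hq3 : (#|F| %% 4 = 3)%N.

Lemma nsq (x : F) : x ^+ 2 != -1.
Proof.
apply/eqP => hx.
have xnz : x != 0 by apply: contra_eq_neq hx => ->; rewrite expr0n /= eq_sym oppr_eq0 oner_eq0.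
have hq : #|F| = (4 * (#|F| %/ 4) + 3)%N by rewrite {1}(divn_eq #|F| 4) hq3 mulnC.
have e1 : x ^+ (4 * (#|F| %/ 4) + 2) = 1.
  have := expf_card x; rewrite {1}hq addnS exprS.
  by rewrite -[X in _ = X -> _](mulr1 x); apply: (mulfI xnz).
have : x ^+ (4 * (#|F| %/ 4) + 2) = -1.
  rewrite (_ : (4 * (#|F| %/ 4) + 2 = 2 * (2 * (#|F| %/ 4) + 1))%N); last by lia.
  by rewrite exprM hx exprD exprM sqrrN !expr1n mul1r expr1.
rewrite e1 => /eqP; rewrite -subr_eq0 opprK -(natrD _ 1 1).
apply/negP; exact: two_neq0.
Qed.
Definition cntN (b : F) : nat := \sum_(x : F) (x ^+ 2 == b).

Lemma sum_eq1 (y : F) : (\sum_(x : F) (x == y) = 1)%N.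
Proof. by rewrite (bigD1 y) //= eqxx big1 // => x /negPf ->. Qed.

Lemma cnt_sq (y : F) : (cntN (y ^+ 2) <= 2)%N.
Proof.
rewrite /cntN (eq_bigr (fun x => nat_of_bool ((x == y) || (x == - y)))); last by move=> x _; rewrite eqf_sqr.
apply: leq_trans (_ : \sum_(x : F) ((x == y) + (x == - y)) <= 2)%N.
  by apply: leq_sum => x _; case: (x == y); case: (x == - y).
by rewrite big_split /= !sum_eq1.
Qed.

Lemma cnt_nsq (b : F) : ~~ [exists y : F, y ^+ 2 == b] -> cntN b = 0%N.
Proof.
move=> /existsPn h; rewrite /cntN big1 // => x _.
by move: (h x) => /negPf ->.
Qed.

Lemma cnt_neg (y : F) : y != 0 -> cntN (- y ^+ 2) = 0%N.
Proof.
move=> ynz; apply: cnt_nsq; apply/existsP => [[x /eqP hx]].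
have := nsq (x / y); rewrite expr_div_n hx mulNr divff ?eqxx //.
by rewrite expf_neq0.
Qed.

Lemma cnt0 : cntN 0 = 1%N.
Proof.
rewrite /cntN (eq_bigr (fun x => nat_of_bool (x == 0))); first exact: sum_eq1.
by move=> x _; rewrite sqrf_eq0.
Qed.

Lemma cnt_le (b : F) : (cntN b + cntN (- b) <= 2)%N.
Proof.
have [->|bnz] := eqVneq b 0; first by rewrite oppr0 cnt0.
have [/existsP [y /eqP hy]|ns1] := boolP [exists y : F, y ^+ 2 == b].
  have ynz : y != 0 by apply: contra_neq bnz => h; rewrite -hy h expr0n.
  by rewrite -hy cnt_neg // addn0 cnt_sq.
have [/existsP [y /eqP hy]|ns2] := boolP [exists y : F, y ^+ 2 == - b].
  have ynz : y != 0.
    by apply: contra_neq bnz => h; apply/eqP; rewrite -oppr_eq0 -hy h expr0n.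
  by rewrite -hy (cnt_nsq ns1) add0n cnt_sq.
by rewrite (cnt_nsq ns1) (cnt_nsq ns2).
Qed.

Lemma sum_cnt : (\sum_(b : F) cntN b = #|F|)%N.
Proof.
rewrite /cntN exchange_big /= -sum1_card.
by apply: eq_bigr => x _; rewrite (eq_bigr (fun b => nat_of_bool (b == x ^+ 2))) ?sum_eq1 // => b _; rewrite eq_sym.
Qed.

Lemma cnt_pair (b : F) : (cntN b + cntN (- b) = 2)%N.
Proof.
have S : (\sum_(c : F) (2 - (cntN c + cntN (- c))) = 0)%N.
  have E : (\sum_(c : F) (2 - (cntN c + cntN (- c))) + \sum_(c : F) (cntN c + cntN (- c))
            = \sum_(c : F) 2)%N.
    by rewrite -big_split /=; apply: eq_bigr => c _; rewrite subnK // cnt_le.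
  have SN : (\sum_(c : F) cntN (- c) = #|F|)%N.
    rewrite -sum_cnt (reindex_inj oppr_inj) /=.
    by apply: eq_bigr => c _; rewrite opprK.
  move: E; rewrite big_split /= sum_cnt SN sum_nat_const cardT -cardE; lia.
move/eqP: S; rewrite sum_nat_eq0 => /forallP /(_ b) /=.
by rewrite subn_eq0 => h; apply/eqP; rewrite eqn_leq cnt_le h.
Qed.

Lemma g_cnt (t : F) : g t = \sum_(b : F) (cntN b)%:R * chi p (t * b).
Proof.
rewrite /g.
rewrite [RHS](eq_bigr (fun b => \sum_(x : F) ((x ^+ 2 == b)%:R * chi p (t * b)))); last first.
  by move=> b _; rewrite /cntN natr_sum mulr_suml.
rewrite exchange_big /=; apply: eq_bigr => x _.
rewrite (bigD1 (x ^+ 2)) //= eqxx mul1r big1 ?addr0 // => b /negPf.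
by rewrite eq_sym => ->; rewrite mul0r.
Qed.

Lemma gN (t : F) : t != 0 -> g (- t) = - g t.
Proof.
move=> tnz; apply/eqP; rewrite -addr_eq0; apply/eqP.
rewrite !g_cnt [in X in X + _](reindex_inj oppr_inj) /= -big_split /=.
rewrite (eq_bigr (fun b => 2 * chi p (t * b))).
  by rewrite -mulr_sumr (sum_chi_mul hc po) (negPf tnz) mul0r mulr0.
move=> b _; rewrite mulrNN -mulrDl -natrD addnC cnt_pair. done.
Qed.

Lemma g_sqr (t : F) : t != 0 -> g t ^+ 2 = - (#|F|%:R).
Proof.
move=> tnz; rewrite -(g_mulN tnz) (gN tnz) mulrN expr2 opprK //.
Qed.
End Gauss.

Lemma sum_prod_row (F : finType) (k : nat) (h : 'I_k -> F -> algC) :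
  \sum_(c : 'rV[F]_k) \prod_(i < k) h i (c ord0 i) = \prod_(i < k) \sum_(x : F) h i x.
Proof.
rewrite bigA_distr_bigA /=.
rewrite (reindex (fun f : {ffun 'I_k -> F} => \row_i f i)) /=; last first.
  exists (fun c : 'rV[F]_k => [ffun i => c ord0 i]) => f _.
    by apply/ffunP => i; rewrite ffunE mxE.
  by apply/rowP => i; rewrite mxE ffunE.
by apply: eq_bigr => f _; apply: eq_bigr => i _; rewrite mxE.
Qed.

Section Main.
Variables (F : finFieldType) (p k : nat).
Hypotheses (hc : p \in [pchar F]) (po : odd p) (hq3 : (#|F| %% 4 = 3)%N).

Definition coef (i : 'I_k) : F := if val i == 0%N then -1 else 1.
Definition Ssum (m : 'rV[F]_k) (t : F) : algC :=
  \sum_(c : 'rV[F]_k) chi p (t * Qform c - dotv m c).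

Lemma q_neq0 : (#|F|%:R : algC) != 0.
Proof. by rewrite pnatr_eq0 -lt0n (ltnW (finNzRing_gt1 F)). Qed.

Lemma lambda_S (m : 'rV[F]_k) :
  lambda p m = (#|F|%:R)^-1 * \sum_(t : F) Ssum m t.
Proof.
rewrite /lambda big_mkcond /= /Ssum exchange_big mulr_sumr /=.
apply: eq_bigr => c _.
have E : forall a : F, (a == 0)%:R = (#|F|%:R)^-1 * \sum_(t : F) chi p (a * t) :> algC.
  by move=> a; rewrite (sum_chi_mul hc po) mulrCA mulVf ?q_neq0 ?mulr1.
rewrite /Ck inE.
have -> : (if Qform c == 0 then chi p (- dotv m c) else 0)
   = (Qform c == 0)%:R * chi p (- dotv m c) by case: (_ == 0); rewrite ?mul1r ?mul0r.
rewrite E -mulrA mulr_suml; congr (_ * _); apply: eq_bigr => t _.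
by rewrite -(chiD hc) mulrC.
Qed.
Lemma S_prod (m : 'rV[F]_k) (t : F) :
  Ssum m t = \prod_(i < k) \sum_(x : F) chi p (t * (coef i * x ^+ 2) - m ord0 i * x).
Proof.
rewrite /Ssum -sum_prod_row; apply: eq_bigr => c _.
rewrite -(chi_sum hc); congr (chi p _).
by rewrite /Qform /dotv mulr_sumr -sumrB.
Qed.

Lemma S0 (m : 'rV[F]_k) : Ssum m 0 = (m == 0)%:R * (#|F|%:R) ^+ k.
Proof.
rewrite S_prod.
rewrite (eq_bigr (fun i => (m ord0 i == 0)%:R * #|F|%:R)); last first.
  move=> i _; rewrite -oppr_eq0 -(sum_chi_mul hc po); apply: eq_bigr => x _.
  by rewrite mul0r sub0r mulNr.
have [->|mnz] := eqVneq m 0.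
  rewrite mul1r (eq_bigr (fun _ => #|F|%:R)) ?prodr_const ?card_ord // => i _.
  by rewrite mxE eqxx mul1r.
have [i hi] : exists i, m ord0 i != 0.
  apply/existsP; apply: contraNT mnz => /existsPn h; apply/eqP/rowP => i.
  by rewrite mxE; apply/eqP; move: (h i); rewrite negbK.
by rewrite mul0r (bigD1 i) //= (negPf hi) !mul0r.
Qed.
Lemma four_neq0 : (4 : F) != 0.
Proof.
have -> : (4 : F) = 2 * 2 by ring.
by rewrite mulf_neq0 // (two_neq0 hc po).
Qed.

Variable j : nat.
Hypothesis hk : k = (4 * j.+1)%N.

Lemma prod_g_gen (n : nat) (t : F) :
  \prod_(i < n.+1) g p (t * (if val i == 0%N then -1 else 1)) = g p (- t) * g p t ^+ n.
Proof.
rewrite big_ord_recl /= mulrN1; congr (_ * _).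
by rewrite (eq_bigr (fun _ => g p t)) ?prodr_const ?card_ord // => i _; rewrite mulr1.
Qed.

Lemma prod_g (t : F) : t != 0 ->
  \prod_(i < k) g p (t * coef i) = - (#|F|%:R) ^+ (k %/ 2).
Proof.
move=> tnz.
have hK : (k %/ 2 = (2 * j + 1).+1)%N.
  rewrite hk (_ : (4 * j.+1) = (2 * j.+1) * 2)%N ?mulnK //; lia.
rewrite hK /coef.
have hk' : k = (4 * j + 3).+1 by rewrite hk; lia.
rewrite hk' prod_g_gen.
rewrite (_ : (4 * j + 3) = (2 * (2 * j + 1)).+1)%N; last by lia.
rewrite exprS exprM (g_sqr hc po hq3 tnz).
rewrite mulrA [g p (- t) * _]mulrC (g_mulN hc po tnz).
have hs : (-1 : algC) ^+ (2 * j + 1) = -1.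
  by rewrite exprD exprM sqrrN !expr1n mul1r expr1.
by rewrite exprNn hs mulN1r mulrN -exprS.
Qed.
Lemma S_nz (m : 'rV[F]_k) (t : F) : t != 0 ->
  Ssum m t = - (#|F|%:R) ^+ (k %/ 2) * chi p (- (Qform m / 4) * t^-1).
Proof.
move=> tnz; rewrite S_prod.
have cnz : forall i, coef i != 0.
  by move=> i; rewrite /coef; case: ifP => _; rewrite ?oppr_eq0 ?oner_eq0.
rewrite (eq_bigr (fun i => chi p (- ((m ord0 i) ^+ 2 / (4 * (t * coef i)))) * g p (t * coef i))); last first.
  move=> i _; rewrite -(compsq hc po) ?mulf_neq0 //.
  by apply: eq_bigr => x _; rewrite mulrA.
rewrite big_split /= (prod_g tnz) mulrC; congr (_ * _).
rewrite -(chi_sum hc); congr (chi p _).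
rewrite sumrN mulNr; congr (- _); rewrite /Qform !mulr_suml; apply: eq_bigr => i _.
have f0 := four_neq0.
rewrite /coef; case: ifP => _; field; by rewrite f0 tnz ?oppr_eq0 ?oner_eq0.
Qed.
Lemma sum_S (m : 'rV[F]_k) :
  \sum_(t : F) Ssum m t = (m == 0)%:R * (#|F|%:R) ^+ k
     - (#|F|%:R) ^+ (k %/ 2) * ((Qform m == 0)%:R * #|F|%:R - 1).
Proof.
rewrite (bigD1 0) //= S0; congr (_ + _).
set cc := - (Qform m / 4).
rewrite (eq_bigr (fun t => - (#|F|%:R) ^+ (k %/ 2) * chi p (cc * t^-1))); last first.
  by move=> t tnz; rewrite S_nz.
rewrite -mulr_sumr -mulNr; congr (_ * _).
have E : \sum_(t : F) chi p (cc * t^-1) = chi p (cc * 0^-1) + \sum_(t | t != 0) chi p (cc * t^-1).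
  by rewrite (bigD1 0).
have E2 : \sum_(t : F) chi p (cc * t^-1) = (Qform m == 0)%:R * #|F|%:R.
  rewrite (reindex_inj invr_inj) /=.
  rewrite (eq_bigr (fun t => chi p (cc * t))); last by move=> t _; rewrite invrK.
  rewrite (sum_chi_mul hc po); congr (_%:R * _).
  by rewrite /cc oppr_eq0 mulf_eq0 invr_eq0 (negPf four_neq0) orbF.
by rewrite -E2 E invr0 mulr0 (chi0 hc) addrC addKr.
Qed.
End Main.
Lemma eig (F : finFieldType) (p k : nat) (hc : p \in [pchar F]) (m x : 'rV[F]_k) :
  \sum_(y | cay_adj x y) chi p (dotv m y) = lambda p m * chi p (dotv m x).
Proof.
have inj : injective (fun c : 'rV[F]_k => x - c).
  by move=> a b /addrI /oppr_inj.
rewrite (reindex_inj inj) /= /lambda mulr_suml.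
apply: eq_big => c; first by rewrite /cay_adj subKr.
move=> _; rewrite -(chiD hc); congr (chi p _).
rewrite [RHS]addrC /dotv -sumrB; apply: eq_bigr => i _; rewrite !mxE mulrBr.
by [].
Qed.

Unset Implicit Arguments.
Theorem theorem1p6 (F : finFieldType) (p q k : nat)
  (hp : prime p) (hp_odd : odd p) (hchar : p \in [pchar F])
  (hq : #|F| = q) (hq3 : (q %% 4 = 3)%N)
  (hk0 : (0 < k)%N) (hk4 : (k %% 4 = 0)%N) :
  forall m : 'rV[F]_k,
    (forall x : 'rV[F]_k,
        \sum_(y | cay_adj x y) chi p (dotv m y) = lambda p m * chi p (dotv m x)) /\
    lambda p m =
      (q%:R : algC) ^+ k *
      (if m \in Ck F k then
         delta0 m / q%:R - (q%:R : algC) ^- (k %/ 2) + (q%:R : algC) ^- ((k + 2) %/ 2)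
       else (q%:R : algC) ^- ((k + 2) %/ 2)).
Proof.
move=> m; split; first by move=> x; apply: eig.
have hq3' : (#|F| %% 4 = 3)%N by rewrite hq.
have hk : k = (4 * (k %/ 4).-1.+1)%N.
  rewrite prednK; first by rewrite {1}(divn_eq k 4) hk4 addn0 mulnC.
  by rewrite divn_gt0 //; apply: contraTT hk0; rewrite -ltnNge => h; lia.
have qnz : (q%:R : algC) != 0 by rewrite -hq q_neq0.
rewrite (lambda_S hchar hp_odd) (sum_S hchar hp_odd hq3' hk) hq.
have hK2 : ((k + 2) %/ 2 = (k %/ 2).+1)%N by lia.
have hkK : k = (k %/ 2 + k %/ 2)%N by lia.
rewrite hK2.
set K := (k %/ 2)%N.
set x := (q%:R : algC) ^+ K.
have hx : (q%:R : algC) ^+ k = x * x by rewrite /x -exprD -hkK.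
rewrite !hx /Ck inE /delta0 exprS.
have xnz : x != 0 by rewrite expf_neq0.
have [hQ|hQ] := eqVneq (Qform m) 0.
  rewrite /=.
  move: qnz xnz; set d := ((m == 0)%:R : algC); set Q := (q%:R : algC) => qnz xnz.
  rewrite -/x; field; by rewrite xnz qnz.
have -> : (m == 0) = false.
  by apply/negP => /eqP hm; move: hQ; rewrite hm /Qform big1 ?eqxx // => i _; rewrite mxE expr0n mulr0.
rewrite /= -/x.
move: qnz xnz; set Q := (q%:R : algC) => qnz xnz.
field; by rewrite xnz qnz.
Qed.
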